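(* Let $r \ge 0$ be a fixed integer. There is a constant $C>0$ (depending only on $r$) such that for every $r$-rank connected graph $G$ with vertex set $V=[n]$, there exists a hypergraph $H$ on $[n]$ with at most $C n^{r+1}$ hyperedges (i.e. $\mathcal O(n^{r+1})$ hyperedges) such that $\mathrm{cl}_r(H) = H_r(G)$.
   Context: For a graph $G=(V,E)$ and $X\subseteq V$, write $\overline X = V\setminus X$. The cut-rank $\rho(X)$ is the rank over the two-element field $\mathbb{F}_2$ of the submatrix of the adjacency matrix of $G$ with rows indexed by $X$ and columns indexed by $\overline X$. A set $X\subseteq V$ (identified with the cut $(X,\overline X)$) is a $k$-split if $\rho(X)\le k$; it is trivial if $\rho(X)=\min(|X|,|\overline X|)$. $G$ is $r$-rank connected if every $k$-split with $k<r$ is trivial. $H_r(G)$ is the hypergraph with vertex set $[n]$ whose hyperedges are all $r$-splits of $G$. A hypergraph on $[n]$ is identified with its set of hyperedges (subsets of $[n]$). $\mathcal K_r(n)$ is the class of hypergraphs $\mathcal E$ on $V=[n]$ such that: (R0) every $X\subseteq V$ with $|X|\le r$ is in $\mathcal E$; (R1) if $A\in\mathcal E$ then $V\setminus A\in\mathcal E$; (R2) if $A,B\in\mathcal E$ and $|A\cap B|\ge r$ then $A\cup B\in\mathcal E$. For a hypergraph $H$ on $[n]$, $\mathrm{cl}_r(H)$ is the intersection of all hypergraphs in $\mathcal K_r(n)$ containing $H$. *)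

(* Defs.v *)
From HB Require Import structures.
From mathcomp Require Import all_boot all_order all_algebra.
Set Implicit Arguments. Unset Strict Implicit. Unset Printing Implicit Defensive.
Import GRing.Theory.

Definition simple_graph (n : nat) (e : rel 'I_n) : Prop :=
  symmetric e /\ irreflexive e.

(* Submatrix over F_2 of the adjacency matrix, rows indexed by X, columns by ~: X. *)
Definition cut_matrix (n : nat) (e : rel 'I_n) (X : {set 'I_n}) :
  'M['F_2]_(#|X|, #|~: X|) :=
  \matrix_(i < #|X|, j < #|~: X|)
     ((e (enum_val i) (enum_val j))%:R)%R.

Definition cut_rank (n : nat) (e : rel 'I_n) (X : {set 'I_n}) : nat :=
  \rank (cut_matrix e X).

Definition is_split (n : nat) (e : rel 'I_n) (k : nat) (X : {set 'I_n}) : bool :=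
  cut_rank e X <= k.

Definition trivial_split (n : nat) (e : rel 'I_n) (X : {set 'I_n}) : bool :=
  cut_rank e X == minn #|X| #|~: X|.

Definition rank_connected (r n : nat) (e : rel 'I_n) : Prop :=
  forall (k : nat) (X : {set 'I_n}), k < r -> is_split e k X -> trivial_split e X.

Definition Hr (r n : nat) (e : rel 'I_n) : {set {set 'I_n}} :=
  [set X | is_split e r X].

Definition in_Krb (r n : nat) (E : {set {set 'I_n}}) : bool :=
  [&& [forall X : {set 'I_n}, (#|X| <= r) ==> (X \in E)],
      [forall A : {set 'I_n}, (A \in E) ==> (~: A \in E)] &
      [forall A : {set 'I_n}, forall B : {set 'I_n},
          [&& A \in E, B \in E & r <= #|A :&: B|] ==> (A :|: B \in E)]].

Definition clr (r n : nat) (H : {set {set 'I_n}}) : {set {set 'I_n}} :=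
  \bigcap_(E : {set {set 'I_n}} | in_Krb r E && (H \subset E)) E.

(* Main.v *)
Require Import Defs.
From mathcomp Require Import all_boot all_order all_algebra.
From mathcomp Require Import zify.
Set Implicit Arguments. Unset Strict Implicit. Unset Printing Implicit Defensive.

Module LAm.
Import GRing.Theory.
Local Open Scope ring_scope.

Section LA.
Variable F : fieldType.
Variable n : nat.
Implicit Types R C X Y U V : {set 'I_n}.

Definition Pm R : 'M[F]_n := diag_mx (\row_i (i \in R)%:R).

Lemma PmE R i j : Pm R i j = ((i \in R) && (i == j))%:R.
Proof. by rewrite /Pm !mxE; case: (i \in R); case: (i == j). Qed.

Lemma Pm_mul U V : Pm U *m Pm V = Pm (U :&: V).
Proof.
apply/matrixP=> i j; rewrite /Pm mul_diag_mx !mxE inE.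
by case: (i \in U); case: (i \in V); case: (i == j); rewrite ?mul1r ?mul0r.
Qed.

Lemma Pm_sub U V : U \subset V -> Pm U = Pm U *m Pm V.
Proof. by move=> /setIidPl h; rewrite Pm_mul h. Qed.

Lemma Pm_add U V : Pm (U :|: V) = Pm U + Pm (~: U) *m Pm V.
Proof.
apply/matrixP=> i j; rewrite Pm_mul /Pm !mxE !inE.
by case: (i \in U); case: (i \in V); case: (i == j); rewrite ?addr0 ?add0r.
Qed.

Lemma Pm_compl X : Pm X + Pm (~: X) = 1%:M.
Proof.
apply/matrixP=> i j; rewrite /Pm !mxE !inE.
by case: (i \in X); case: (i == j); rewrite ?addr0 ?add0r.
Qed.

Lemma PmCX X : Pm (~: X) *m Pm X = 0.
Proof. by rewrite Pm_mul setIC setICr; apply/matrixP=> i j; rewrite /Pm !mxE in_set0 mul0rn. Qed.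

Definition fr (M : 'M[F]_n) X Y := \rank (Pm X *m M *m Pm Y).
Definition Ts (M : 'M[F]_n) X Y := (Pm (~: X) + Pm Y *m M^T)%MS.

Lemma rankT M X Y : \rank (Ts M X Y) = (\rank (Pm (~: X)) + fr M X Y)%N.
Proof.
set B := Pm Y *m M^T.
have hB : B = B *m Pm X + B *m Pm (~: X) by rewrite -mulmxDr Pm_compl mulmx1.
have e1 : (Pm (~: X) + B == Pm (~: X) + B *m Pm X)%MS.
  apply/andP; split; rewrite addsmx_sub addsmxSl /=.
    rewrite {1}hB; apply: addmx_sub; first exact: addsmxSr.
    exact: submx_trans (submxMl _ _) (addsmxSl _ _).
  have -> : B *m Pm X = B + - (B *m Pm (~: X)) by rewrite {2}hB addrK.
  apply: addmx_sub; first exact: addsmxSr.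
  rewrite (eqmx_opp _).
  exact: submx_trans (submxMl _ _) (addsmxSl _ _).
rewrite /Ts -/B (eqmx_rank e1).
have cap0 : (\rank (Pm (~: X) :&: B *m Pm X) = 0)%N.
  apply/eqP; rewrite mxrank_eq0; set Cc := (_ :&: _)%MS.
  have /submxP [D1 h1] : (Cc <= Pm (~: X))%MS by apply: capmxSl.
  have /submxP [D2 h2] : (Cc <= B *m Pm X)%MS by apply: capmxSr.
  have : Cc *m Pm X = Cc by rewrite h2 -!mulmxA -(Pm_sub (subxx X)).
  by rewrite {1}h1 -mulmxA PmCX mulmx0 => <-.
have := mxrank_sum_cap (Pm (~: X)) (B *m Pm X); rewrite cap0 addn0 => ->.
congr (_ + _)%N. rewrite /fr -mxrank_tr !trmx_mul !tr_diag_mx /B.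
by rewrite trmxK mulmxA.
Qed.

Definition SR R : 'M[F]_(#|R|, n) := rowsub (fun i : 'I_#|R| => enum_val i) 1%:M.
Definition QR R : 'M[F]_(n, #|R|) := colsub (fun i : 'I_#|R| => enum_val i) 1%:M.

Lemma SQ R : SR R *m QR R = 1%:M.
Proof.
rewrite /SR /QR -mxsub_mul mul1mx; apply/matrixP => i j.
by rewrite !mxE (inj_eq enum_val_inj).
Qed.

Lemma QS R : QR R *m SR R = Pm R.
Proof.
apply/matrixP => a b; rewrite PmE !mxE.
case: (boolP (a \in R)) => aR /=.
  rewrite (bigD1 (enum_rank_in aR a)) //= !mxE enum_rankK_in // eqxx mul1r.
  rewrite big1 ?addr0 // => i hi; rewrite !mxE.
  have -> : (a == enum_val i) = false.
    apply/negbTE; apply: contra hi => /eqP ea.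
    by have := enum_valK_in aR i; rewrite -ea => ->.
  by rewrite mul0r.
rewrite big1 // => i _; rewrite !mxE.
have -> : (a == enum_val i) = false.
  by apply/negbTE; apply: contraNneq aR => ->; apply: enum_valP.
by rewrite mul0r.
Qed.

Lemma rank_sub (M : 'M[F]_n) R C :
  \rank (\matrix_(i < #|R|, j < #|C|) M (enum_val i) (enum_val j)) =
  \rank (Pm R *m M *m Pm C).
Proof.
have -> : \matrix_(i < #|R|, j < #|C|) M (enum_val i) (enum_val j)
          = SR R *m M *m QR C.
  rewrite /SR /QR -mulmxA mulmx_colsub mulmx1 -mxsub_mul mul1mx.
  by apply/matrixP => i j; rewrite !mxE.
set N := SR R *m M *m QR C.
rewrite -QS -QS !mulmxA mxrankMfree; last by apply/row_freeP; exists (QR C); exact: SQ.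
have -> : QR R *m SR R *m M *m QR C = QR R *m N by rewrite /N !mulmxA.
clearbody N.
rewrite -(mxrank_tr (QR R *m N)) trmx_mul mxrankMfree ?mxrank_tr //.
apply/row_freeP; exists (SR R)^T; by rewrite -trmx_mul SQ trmx1.
Qed.

Lemma rank_Pm R : \rank (Pm R) = #|R|.
Proof.
have := rank_sub 1%:M R R.
rewrite mulmx1 -(Pm_sub (subxx R)) => <-.
have -> : \matrix_(i < #|R|, j < #|R|) (1%:M : 'M[F]_n) (enum_val i) (enum_val j) = 1%:M.
  by apply/matrixP => i j; rewrite !mxE (inj_eq enum_val_inj).
exact: mxrank1.
Qed.

Lemma Pm_subM p U V (N : 'M[F]_(n, p)) : U \subset V -> (Pm U *m N <= Pm V *m N)%MS.
Proof. by move=> /Pm_sub h; rewrite h -mulmxA submxMl. Qed.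

Lemma Pm_subS U V : U \subset V -> (Pm U <= Pm V)%MS.
Proof. by move=> h; have := Pm_subM 1%:M h; rewrite !mulmx1. Qed.

Lemma Ts_union M X1 X2 Y1 Y2 :
  (Ts M (X1 :&: X2) (Y1 :|: Y2) <= Ts M X1 Y1 + Ts M X2 Y2)%MS.
Proof.
rewrite /Ts addsmx_sub; apply/andP; split.
  rewrite setCI Pm_add; apply: addmx_sub.
    exact: submx_trans (addsmxSl _ _) (addsmxSl _ _).
  exact: submx_trans (submxMl _ _) (submx_trans (addsmxSl _ _) (addsmxSr _ _)).
rewrite Pm_add mulmxDl -mulmxA; apply: addmx_sub.
  exact: submx_trans (addsmxSr _ _) (addsmxSl _ _).
exact: submx_trans (submxMl _ _) (submx_trans (addsmxSr _ _) (addsmxSr _ _)).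
Qed.

Lemma Ts_inter M X1 X2 Y1 Y2 :
  (Ts M (X1 :|: X2) (Y1 :&: Y2) <= Ts M X1 Y1 :&: Ts M X2 Y2)%MS.
Proof.
rewrite sub_capmx; apply/andP; split; apply: addsmxS; apply: Pm_subS || apply: Pm_subM.
- by rewrite setCS subsetUl.
- exact: subsetIl.
- by rewrite setCS subsetUr.
- exact: subsetIr.
Qed.

Lemma fr_submod M X1 X2 Y1 Y2 :
  (fr M (X1 :&: X2) (Y1 :|: Y2) + fr M (X1 :|: X2) (Y1 :&: Y2)
   <= fr M X1 Y1 + fr M X2 Y2)%N.
Proof.
have h1 := mxrankS (Ts_union M X1 X2 Y1 Y2).
have h2 := mxrankS (Ts_inter M X1 X2 Y1 Y2).
have h3 := mxrank_sum_cap (Ts M X1 Y1) (Ts M X2 Y2).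
move: h1 h2 h3; rewrite !rankT !rank_Pm.
have := cardsUI (~: X1) (~: X2); rewrite -setCI -setCU.
lia.
Qed.

End LA.

End LAm.
Import LAm.

Module Gm.
Import GRing.Theory.
Local Open Scope ring_scope.

Section Graph.
Variable n : nat.
Variable e : rel 'I_n.

Definition Adj : 'M['F_2]_n := \matrix_(i, j) ((e i j)%:R)%R.

Lemma cut_rankE X : cut_rank e X = fr Adj X (~: X).
Proof.
rewrite /cut_rank /fr -rank_sub; congr (\rank _).
by apply/matrixP => i j; rewrite !mxE.
Qed.

Lemma cut_rank_row X : (cut_rank e X <= #|X|)%N.
Proof. exact: rank_leq_row. Qed.

Lemma cut_rank_col X : (cut_rank e X <= #|~: X|)%N.
Proof. exact: rank_leq_col. Qed.

Lemma cut_rank_submod A B :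
  (cut_rank e (A :&: B) + cut_rank e (A :|: B) <= cut_rank e A + cut_rank e B)%N.
Proof.
rewrite !cut_rankE setCI setCU; exact: fr_submod.
Qed.

Hypothesis esym : symmetric e.

Lemma cut_rankC X : cut_rank e (~: X) = cut_rank e X.
Proof.
rewrite !cut_rankE setCK /fr -mxrank_tr !trmx_mul !tr_diag_mx.
have -> : Adj^T = Adj by apply/matrixP => i j; rewrite !mxE esym.
by rewrite mulmxA.
Qed.

End Graph.

End Gm.
Import Gm.

Module G2m.

Section Comb.
Variables (r n : nat) (e : rel 'I_n).
Hypothesis esym : symmetric e.
Hypothesis hconn : rank_connected r e.

Local Notation rho := (cut_rank e).

Lemma rc_small Y : rho Y < r -> rho Y = minn #|Y| #|~: Y|.
Proof. by move=> h; apply/eqP; apply: (hconn h); rewrite /is_split. Qed.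

Lemma Hr_K : in_Krb r (Hr r e).
Proof.
apply/and3P; split.
- apply/forallP => X; apply/implyP => hX; rewrite inE /is_split.
  exact: leq_trans (cut_rank_row e X) hX.
- apply/forallP => A; apply/implyP; rewrite !inE /is_split cut_rankC //.
- apply/forallP => A; apply/forallP => B; apply/implyP => /and3P [hA hB hAB].
  move: hA hB; rewrite !inE /is_split => hA hB.
  have hs := cut_rank_submod e A B.
  have hc : #|~: (A :|: B)| <= #|~: (A :&: B)|.
    by apply: subset_leq_card; rewrite setCS; apply: subset_trans (subsetIl A B) (subsetUl A B).
  have hb := cut_rank_col e (A :|: B).
  case: (ltnP (rho (A :&: B)) r) => h.
    have := rc_small h; lia.
  lia.
Qed.


Lemma split_setT : is_split e r setT.
Proof.
rewrite /is_split; apply: leq_trans (cut_rank_col e _) _.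
by rewrite setCT cards0.
Qed.

Definition Pmin (S : {set 'I_n}) : {set 'I_n} :=
  [arg min_(Y < setT | is_split e r Y && (S \subset Y)) #|Y|].

Lemma Pmin_spec S :
  [/\ is_split e r (Pmin S), S \subset Pmin S &
      forall Y, is_split e r Y -> S \subset Y -> #|Pmin S| <= #|Y|].
Proof.
rewrite /Pmin; case: arg_minnP.
  by rewrite split_setT subsetT.
move=> P /andP [h1 h2] hm; split => // Y hY hS; apply: hm.
by rewrite hY hS.
Qed.

Lemma Pmin_good (S X : {set 'I_n}) : S \subset X -> #|S| = r.+1 -> is_split e r X ->
  #|X| <= #|~: X|.+1 -> Pmin S \subset X.
Proof.
move=> hSX hS hX hsz.
have [hP hSP hmin] := Pmin_spec S.
set P := Pmin S in hP hSP hmin *.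
case: (boolP (P \subset X)) => // nPX; exfalso.
have hD : 0 < #|P :\: X| by rewrite card_gt0 setD_eq0.
have hc1 := cardsID X P.
have hSPX : S \subset P :&: X by rewrite subsetI hSP.
have hc2 : #|S| <= #|P :&: X| by apply: subset_leq_card.
have hPX : ~~ is_split e r (P :&: X).
  apply/negP => h; have := hmin _ h hSPX; lia.
move: hPX; rewrite /is_split -ltnNge => hPX.
have hs := cut_rank_submod e P X.
move: hP hX; rewrite /is_split => hP hX.
have hlt : rho (P :|: X) < r by lia.
have := rc_small hlt.
have hc3 : #|S| <= #|P :|: X|.
  by apply: subset_leq_card; apply: subset_trans hSX (subsetUr P X).
have hc4 := cardsID P (~: X).
have e1 : ~: X :\: P = ~: (P :|: X) by rewrite setCU setDE setIC.
have e2 : ~: X :&: P = P :\: X by rewrite setDE setIC.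
rewrite e1 e2 in hc4.
have hm := hmin _ hX hSX.
lia.
Qed.


Lemma exists_sub (k : nat) (X : {set 'I_n}) : k <= #|X| ->
  exists T : {set 'I_n}, T \subset X /\ #|T| = k.
Proof.
elim: k => [|k IH] hk.
  by exists (set0 : {set 'I_n}); rewrite sub0set cards0.
have [T [hTX hT]] := IH (ltnW hk).
have : 0 < #|X :\: T| by rewrite cardsD (setIidPr hTX); lia.
case/card_gt0P => x; rewrite inE => /andP [xT xX].
exists (x |: T); split.
  by rewrite subUset sub1set xX.
by rewrite cardsU1 xT hT.
Qed.

Section Gen.
Variable E : {set {set 'I_n}}.
Hypothesis hE : in_Krb r E.

Lemma KR0 (X : {set 'I_n}) : #|X| <= r -> X \in E.
Proof. by case/and3P: hE => /forallP h _ _ hX; have /implyP := h X; apply. Qed.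

Lemma KR1 (X : {set 'I_n}) : X \in E -> ~: X \in E.
Proof. by case/and3P: hE => _ /forallP h _ hX; have /implyP := h X; apply. Qed.

Lemma KR2 (A B : {set 'I_n}) : A \in E -> B \in E -> r <= #|A :&: B| -> A :|: B \in E.
Proof.
case/and3P: hE => _ _ /forallP h hA hB hAB.
have /forallP h2 := h A; have /implyP := h2 B; apply.
by rewrite hA hB hAB.
Qed.

Lemma union_in (T : {set 'I_n}) (F : 'I_n -> {set 'I_n}) (s : seq 'I_n) (Y0 : {set 'I_n}) :
  r <= #|T| -> Y0 \in E -> T \subset Y0 ->
  (forall x, x \in s -> F x \in E /\ T \subset F x) ->
  Y0 :|: \bigcup_(x <- s) F x \in E.
Proof.
move=> hT; elim: s Y0 => [|a s IH] Y0 hY0 hTY hs.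
  by rewrite big_nil setU0.
rewrite big_cons setUA.
have [ha hTa] := hs a (mem_head _ _).
apply: IH.
- apply: KR2 => //; apply: leq_trans hT _; apply: subset_leq_card.
  by rewrite subsetI hTY hTa.
- exact: subset_trans hTY (subsetUl _ _).
- by move=> x hx; apply: hs; rewrite inE hx orbT.
Qed.

Hypothesis hH : Pmin @: [set S : {set 'I_n} | #|S| == r.+1] \subset E.

Lemma gen_half (X : {set 'I_n}) : is_split e r X -> r < #|X| -> #|X| <= #|~: X| -> X \in E.
Proof.
move=> hX hr hsz.
have [T [hTX hT]] := exists_sub (ltnW hr).
have : 0 < #|X :\: T| by rewrite cardsD (setIidPr hTX); lia.
case/card_gt0P => x0 hx0.
have key x : x \in X :\: T ->
   [/\ Pmin (x |: T) \in E, T \subset Pmin (x |: T), x \in Pmin (x |: T)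
      & Pmin (x |: T) \subset X].
  rewrite inE => /andP [xT xX].
  have hS : #|x |: T| = r.+1 by rewrite cardsU1 xT hT.
  have hSX : x |: T \subset X by rewrite subUset sub1set xX.
  have [_ hSP _] := Pmin_spec (x |: T).
  split.
  - apply: (subsetP hH); apply: imset_f; by rewrite inE hS.
  - exact: subset_trans (subsetUr _ _) hSP.
  - by apply: (subsetP hSP); rewrite !inE eqxx.
  - apply: Pmin_good => //; lia.
have [h1 h2 h3 h4] := key x0 hx0.
have hXeq : X = Pmin (x0 |: T) :|: \bigcup_(x <- enum (X :\: T)) Pmin (x |: T).
  rewrite big_enum /=; apply/eqP; rewrite eqEsubset; apply/andP; split.
    apply/subsetP => y yX; rewrite inE.
    case: (boolP (y \in T)) => yT.
      by rewrite (subsetP h2 _ yT).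
    have hy : y \in X :\: T by rewrite inE yT yX.
    have [_ _ h _] := key y hy.
    by apply/orP; right; apply/bigcupP; exists y.
  rewrite subUset h4 /=; apply/bigcupsP => x hx.
  by have [_ _ _ ->] := key x hx.
rewrite hXeq; apply: (@union_in T) => //; first by rewrite hT.
move=> x; rewrite mem_enum => hx; have [? ? _ _] := key x hx; by split.
Qed.

Lemma gen_all (X : {set 'I_n}) : is_split e r X -> X \in E.
Proof.
move=> hX.
case: (leqP #|X| r) => hr; first exact: KR0.
case: (leqP #|X| #|~: X|) => hsz; first exact: gen_half.
rewrite -(setCK X); apply: KR1.
case: (leqP #|~: X| r) => hr'; first exact: KR0.
apply: gen_half => //.
  by rewrite /is_split cut_rankC.
by rewrite setCK; apply: ltnW.
Qed.

End Gen.

End Comb.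

End G2m.
Import G2m.

Lemma ffact_le_exp (m k : nat) : m ^_ k <= m ^ k.
Proof.
elim: k m => [|k IH] m; first by rewrite ffactn0 expn0.
rewrite ffactnS expnS; apply: leq_mul => //.
apply: leq_trans (IH _) _.
case: k {IH} => [|k]; first by rewrite !expn0.
by rewrite leq_exp2r // leq_pred.
Qed.

Lemma bin_le_exp (m k : nat) : 'C(m, k) <= m ^ k.
Proof.
apply: leq_trans (ffact_le_exp m k); rewrite -bin_ffact.
by apply: leq_pmulr; apply: fact_gt0.
Qed.

Theorem theorem1 (r : nat) :
  exists C : nat, 0 < C /\
    forall (n : nat) (e : rel 'I_n),
      simple_graph e -> rank_connected r e ->
      exists H : {set {set 'I_n}},
        #|H| <= C * n ^ r.+1 /\ clr r H = Hr r e.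
Proof.
exists 1; split => // n e [esym _] hconn.
exists (Pmin r e @: [set S : {set 'I_n} | #|S| == r.+1]); split.
  rewrite mul1n; apply: leq_trans (leq_imset_card _ _) _.
  by rewrite card_draws card_ord; apply: bin_le_exp.
apply/eqP; rewrite eqEsubset; apply/andP; split.
  rewrite /clr; apply: bigcap_inf.
  rewrite Hr_K //=; apply/subsetP => Y /imsetP [S _ ->]; rewrite inE.
  by case: (Pmin_spec r e S).
apply/subsetP => X; rewrite inE => hX; apply/bigcapP => E /andP [hE hH].
exact: (gen_all esym hconn hE hH hX).
Qed.
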